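(* Let $H_1,\dots,H_n$ be finite-dimensional Hilbert spaces and let $\Lambda$ be a trace-preserving quantum channel on operators on $H_1\otimes\cdots\otimes H_n$ implementable by local operations and classical communication (LOCC) which is unital, i.e. $\Lambda(I)=I$. Then for every density operator $\rho$ on $H_1\otimes\cdots\otimes H_n$, $E_W(\Lambda(\rho))\le E_W(\rho)$.
   Context: A density operator on $H_1\otimes\cdots\otimes H_n$ is (fully) separable if it is a convex combination of product states $\sigma_1\otimes\cdots\otimes\sigma_n$. An entanglement witness (EW) is a Hermitian operator $W$ with $\mathrm{Tr}(W\sigma)\ge0$ for every separable $\sigma$; only normalized witnesses, $\mathrm{Tr}(W)=1$, are considered. An optimal entanglement witness $W_\rho$ for $\rho$ minimizes $\mathrm{Tr}(W\rho)$ over all normalized EWs. The witnessed entanglement is $E_W(\rho)=\max\{0,-\mathrm{Tr}(W_\rho\rho)\}$. *)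

(* Defs.v *)
From HB Require Import structures.
From mathcomp Require Import all_boot all_order all_algebra.
From mathcomp Require Import complex.
From mathcomp Require Import boolp classical_sets reals.
Set Implicit Arguments. Unset Strict Implicit. Unset Printing Implicit Defensive.
Import Order.TTheory GRing.Theory Num.Theory.
Local Open Scope ring_scope.

(* Operators between finite-dimensional spaces with orthonormal bases
   indexed by the finite types T and U: plain complex-valued kernels. *)
Definition Mat (R : realType) (T U : finType) := T -> U -> R[i].

Section Ops.
Variable R : realType.

Definition mulM (T U V : finType) (A : Mat R T U) (B : Mat R U V) : Mat R T V :=
  fun x z => \sum_(y : U) A x y * B y z.
Definition adjM (T U : finType) (A : Mat R T U) : Mat R U T :=
  fun y x => conjc (A x y).
Definition idM (T : finType) : Mat R T T := fun x y => if x == y then 1 else 0.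
Definition trM (T : finType) (A : Mat R T T) : R[i] := \sum_(x : T) A x x.

Definition hermitian (T : finType) (A : Mat R T T) : Prop :=
  forall x y, A x y = conjc (A y x).
Definition psd (T : finType) (A : Mat R T T) : Prop :=
  hermitian A /\
  forall v : T -> R[i], 0 <= \sum_(x : T) \sum_(y : T) conjc (v x) * A x y * v y.
Definition density (T : finType) (A : Mat R T T) : Prop := psd A /\ trM A = 1.
End Ops.

(* Basis index of H_1 (x) ... (x) H_n with dim H_i = d i. *)
Definition Idx (n : nat) (d : 'I_n -> nat) : finType :=
  {dffun forall i : 'I_n, 'I_(d i)}.
Definition Op (R : realType) (n : nat) (d : 'I_n -> nat) := Mat R (Idx d) (Idx d).

Section Sep.
Variables (R : realType) (n : nat) (d : 'I_n -> nat).

Definition prod_op (s : forall i : 'I_n, Mat R 'I_(d i) 'I_(d i)) : Op R d :=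
  fun x y => \prod_(i < n) s i (x i) (y i).

Definition separable (rho : Op R d) : Prop :=
  exists (k : nat) (p : 'I_k -> R[i])
         (s : 'I_k -> forall i : 'I_n, Mat R 'I_(d i) 'I_(d i)),
    [/\ forall j, 0 <= p j, \sum_(j < k) p j = 1,
        forall j i, density (s j i)
      & forall x y, rho x y = \sum_(j < k) p j * prod_op (s j) x y].

Definition EW (W : Op R d) : Prop :=
  hermitian W /\ forall sigma, separable sigma -> 0 <= trM (mulM W sigma).
Definition normalized_EW (W : Op R d) : Prop := EW W /\ trM W = 1.

(* E_W(rho) = max{0, - min_W Tr(W rho)}; the minimum over normalized
   witnesses (attained, by compactness) is written as an infimum. *)
Definition E_W (rho : Op R d) : R :=
  Num.max 0 (- inf [set complex.Re (trM (mulM W rho)) | W in [set W | normalized_EW W]]).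
End Sep.

Section LOCC.
Variables (R : realType) (n : nat).

(* Kraus operator a acting on party k only (identity on the other parties),
   from dims d to dims e (with e j = d j for j != k). *)
Definition lift_local (d e : 'I_n -> nat) (k : 'I_n)
    (a : Mat R 'I_(e k) 'I_(d k)) : Mat R (Idx e) (Idx d) :=
  fun x y => a (x k) (y k) *
    (if [forall j : 'I_n, (j != k) ==> (nat_of_ord (x j) == nat_of_ord (y j))]
     then 1 else 0).

Definition local_branch (d e : 'I_n -> nat) (k : 'I_n) (m : nat)
    (A : 'I_m -> seq (Mat R 'I_(e k) 'I_(d k))) (o : 'I_m)
    (X : Op R d) : Op R e :=
  fun x y => \sum_(a <- A o)
     mulM (mulM (lift_local a) X) (adjM (lift_local a)) x y.

(* Finite-round LOCC instruments, as lists of their branches (CP maps). *)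
Inductive LOCC_instr : forall d e : 'I_n -> nat, seq (Op R d -> Op R e) -> Prop :=
| LI_local (k : 'I_n) (d e : 'I_n -> nat) (m : nat)
    (A : 'I_m -> seq (Mat R 'I_(e k) 'I_(d k))) :
    (forall j, j != k -> d j = e j) ->
    (forall u v, \sum_(o < m) \sum_(a <- A o) mulM (adjM a) a u v = @idM R _ u v) ->
    LOCC_instr [seq local_branch A o | o <- enum 'I_m]
| LI_comp (d e f : 'I_n -> nat) (Fs : seq (Op R d -> Op R e))
    (Gss : seq (seq (Op R e -> Op R f))) :
    LOCC_instr Fs -> size Gss = size Fs ->
    (forall i, (i < size Fs)%N -> LOCC_instr (nth [::] Gss i)) ->
    LOCC_instr (flatten [seq [seq G \o p.1 | G <- p.2] | p <- zip Fs Gss]).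

Definition LOCC_channel (d : 'I_n -> nat) (L : Op R d -> Op R d) : Prop :=
  exists Fs : seq (Op R d -> Op R d), LOCC_instr Fs /\
    forall X x y, L X x y = \sum_(F <- Fs) F X x y.

Definition trace_preserving (d : 'I_n -> nat) (L : Op R d -> Op R d) : Prop :=
  forall X, trM (L X) = trM X.
Definition unital (d : 'I_n -> nat) (L : Op R d -> Op R d) : Prop :=
  forall x y, L (@idM R (Idx d)) x y = @idM R (Idx d) x y.
End LOCC.

(* Main.v *)
Require Import Defs.
From mathcomp Require Import all_boot all_order all_algebra.
From mathcomp Require Import complex.
From mathcomp Require Import boolp classical_sets reals.
From mathcomp Require Import ring.
Set Implicit Arguments. Unset Strict Implicit. Unset Printing Implicit Defensive.
Import Order.TTheory GRing.Theory Num.Theory.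
Local Open Scope ring_scope.
Local Notation herm := Defs.hermitian.

Section Basic.
Variable R : realType.
Local Notation C := R[i].

Lemma cjM (a b : C) : conjc (a * b) = conjc a * conjc b.
Proof. exact: rmorphM. Qed.
Lemma cjD (a b : C) : conjc (a + b) = conjc a + conjc b.
Proof. exact: rmorphD. Qed.
Lemma cjN (a : C) : conjc (- a) = - conjc a.
Proof. exact: rmorphN. Qed.
Lemma cj_sum (I : Type) (r : seq I) (P : pred I) (F : I -> C) :
  conjc (\sum_(i <- r | P i) F i) = \sum_(i <- r | P i) conjc (F i).
Proof. exact: rmorph_sum. Qed.
Lemma cj_prod (I : Type) (r : seq I) (P : pred I) (F : I -> C) :
  conjc (\prod_(i <- r | P i) F i) = \prod_(i <- r | P i) conjc (F i).
Proof. exact: rmorph_prod. Qed.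
Lemma cj_nat k : conjc (k%:R : C) = k%:R.
Proof. exact: conjc_nat. Qed.

Lemma mulMA (T U V W : finType) (A : Mat R T U) (B : Mat R U V) (D : Mat R V W) :
  mulM (mulM A B) D = mulM A (mulM B D).
Proof.
apply/funext=> x; apply/funext=> z; rewrite /mulM.
under eq_bigr do rewrite mulr_suml.
rewrite exchange_big; apply: eq_bigr => y _; rewrite mulr_sumr.
by apply: eq_bigr => w _; rewrite mulrA.
Qed.

Lemma adjM_mul (T U V : finType) (A : Mat R T U) (B : Mat R U V) :
  adjM (mulM A B) = mulM (adjM B) (adjM A).
Proof.
apply/funext=> x; apply/funext=> z; rewrite /adjM /mulM cj_sum.
by apply: eq_bigr => y _; rewrite cjM mulrC.
Qed.

Lemma adjMK (T U : finType) (A : Mat R T U) : adjM (adjM A) = A.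
Proof. by apply/funext=> x; apply/funext=> z; rewrite /adjM conjcK. Qed.

Lemma trM_mulC (T U : finType) (A : Mat R T U) (B : Mat R U T) :
  trM (mulM A B) = trM (mulM B A).
Proof.
rewrite /trM /mulM exchange_big; apply: eq_bigr => y _.
by apply: eq_bigr => x _; rewrite mulrC.
Qed.

Lemma conj_trM (T : finType) (A : Mat R T T) : conjc (trM A) = trM (adjM A).
Proof. by rewrite /trM cj_sum. Qed.

Lemma herm_adj (T : finType) (A : Mat R T T) : herm A -> adjM A = A.
Proof. by move=> h; apply/funext=> x; apply/funext=> z; rewrite /adjM -h. Qed.

Lemma ge0_conj (c : C) : 0 <= c -> conjc c = c.
Proof. by case: c => a b; rewrite lecE /= => /andP[/eqP -> _]; rewrite /conjc oppr0. Qed.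

Lemma mulJ_ge0 (c : C) : 0 <= conjc c * c.
Proof. by rewrite mulrC mulcJ_ge0. Qed.

Lemma mulJ_eq0 (c : C) : (conjc c * c == 0) = (c == 0).
Proof. by rewrite mulf_eq0 conjc_eq0 orbb. Qed.


Lemma sum_dr (T : finType) (F : T -> C) (x : T) :
  \sum_(w : T) F w * (w == x)%:R = F x.
Proof.
rewrite (bigD1 x) //= eqxx mulr1 big1 ?addr0 // => w /negbTE ->; exact: mulr0.
Qed.
Lemma sum_dl (T : finType) (F : T -> C) (x : T) :
  \sum_(w : T) (w == x)%:R * F w = F x.
Proof. by rewrite -[RHS](sum_dr F x); apply: eq_bigr => w _; rewrite mulrC. Qed.

Definition col (T : finType) (v : T -> C) : Mat R T unit := fun x _ => v x.
Definition form (T : finType) (A : Mat R T T) (v : T -> C) :=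
  \sum_(x : T) \sum_(y : T) conjc (v x) * A x y * v y.

Lemma formE (T : finType) (A : Mat R T T) v :
  form A v = mulM (mulM (adjM (col v)) A) (col v) tt tt.
Proof.
rewrite /form /mulM /adjM /col.
under [RHS]eq_bigr do rewrite mulr_suml.
by rewrite exchange_big.
Qed.

Lemma herm_adjE (T : finType) (A : Mat R T T) : herm A <-> adjM A = A.
Proof.
split; first exact: herm_adj.
by move=> h x y; rewrite -{1}h.
Qed.

Lemma psd_diag (T : finType) (A : Mat R T T) x : psd A -> 0 <= A x x.
Proof.
case=> _ hf; move: (hf (fun z => (z == x)%:R)) => /=.
rewrite (eq_bigr (fun x0 => conjc ((x0 == x)%:R) * A x0 x)) => [|x0 _]; last exact: sum_dr.
suff -> : \sum_x0 conjc ((x0 == x)%:R) * A x0 x = A x x by [].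
by under eq_bigr do rewrite cj_nat; rewrite sum_dl.
Qed.

Lemma psd_tr_ge0 (T : finType) (A : Mat R T T) : psd A -> 0 <= trM A.
Proof. by move=> h; apply: sumr_ge0 => x _; exact: psd_diag. Qed.

Lemma sum2 (T : finType) (F : T -> C) x y : x != y ->
  (forall z, z != x -> z != y -> F z = 0) -> \sum_z F z = F x + F y.
Proof.
move=> nxy h; rewrite (bigD1 x) //= (bigD1 y) /=; last by rewrite eq_sym.
by rewrite big1 ?addr0 // => z /andP[zy zx]; apply: h.
Qed.

Lemma psd_tr0 (T : finType) (A : Mat R T T) : psd A -> trM A = 0 ->
  forall x y, A x y = 0.
Proof.
move=> hA htr.
have hd : forall x, A x x = 0.
  by move=> x; apply: (psumr_eq0P _ htr) => // z _; exact: psd_diag.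
move=> x y; have [->|nxy] := eqVneq x y; first exact: hd.
case: hA => hh hf.
set a := A x y.
pose t := - conjc a.
pose v := fun z => if z == x then 1 else if z == y then t else 0.
have := hf v.
have vx : v x = 1 by rewrite /v eqxx.
have vy : v y = t by rewrite /v eqxx eq_sym (negbTE nxy).
have v0 : forall z, z != x -> z != y -> v z = 0.
  by move=> z zx zy; rewrite /v (negbTE zx) (negbTE zy).
have inner : forall z, \sum_w conjc (v z) * A z w * v w =
    conjc (v z) * A z x * v x + conjc (v z) * A z y * v y.
  by move=> z; apply: sum2 => // w wx wy; rewrite (v0 w) // mulr0.
move: (hf v); rewrite (sum2 nxy) => [|z zx zy]; last first.
  by rewrite big1 // => w _; rewrite (v0 z) // conjc0 !mul0r.
rewrite !inner vx vy !hd (hh y x) -/a conjc1 /t cjN conjcK.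
have -> : 1 * 0 * 1 + 1 * a * - conjc a + (- a * conjc a * 1 + - a * 0 * - conjc a) =
   - (2%:R * (conjc a * a)) by ring.
rewrite oppr_ge0 pmulr_rle0 ?ltr0n // => h.
have : conjc a * a == 0 by rewrite eq_le h mulJ_ge0.
by rewrite mulJ_eq0 => /eqP.
Qed.

Lemma psd_scale (T : finType) (c : C) (A : Mat R T T) : 0 <= c -> psd A ->
  psd (fun x y => c * A x y).
Proof.
move=> hc [hh hf]; split.
  by move=> x y; rewrite cjM ge0_conj // -hh.
move=> v; have := hf v => h.
have -> : \sum_x \sum_y conjc (v x) * (c * A x y) * v y =
    c * \sum_x \sum_y conjc (v x) * A x y * v y.
  rewrite mulr_sumr; apply: eq_bigr => x _; rewrite mulr_sumr.
  by apply: eq_bigr => y _; ring.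
exact: mulr_ge0.
Qed.

Lemma psd_form (T : finType) (A : Mat R T T) : psd A <-> herm A /\ forall v, 0 <= form A v.
Proof. by []. Qed.

Lemma psd_cong (T U : finType) (B : Mat R U T) (A : Mat R T T) : psd A ->
  psd (mulM (mulM B A) (adjM B)).
Proof.
move=> [hh hf]; split.
  by apply/herm_adjE; rewrite !adjM_mul adjMK (herm_adj hh) mulMA.
move=> v; have := hf (fun p => mulM (adjM B) (col v) p tt).
rewrite -/(form _ _) -/(form _ _) !formE.
have -> : col (fun p => mulM (adjM B) (col v) p tt) = mulM (adjM B) (col v).
  by apply/funext => p; apply/funext => -[].
by rewrite adjM_mul adjMK !mulMA.
Qed.


Lemma dep_distr (I : finType) (T_ : I -> finType) (F : forall i, T_ i -> C) :
  \sum_(x : {dffun forall i : I, T_ i}) \prod_(i : I) F i (x i) =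
  \prod_(i : I) \sum_(t : T_ i) F i t.
Proof.
rewrite (reindex (@dffun_of_fprod I T_)); last exact/onW_bij/dffun_of_fprod_bij.
under eq_bigr do under eq_bigr do rewrite ffunE.
pose P_ i := [ffun t : T_ i => F i t].
transitivity (\sum_(t : fprod T_) \prod_(i in I) P_ i (t i)).
  by apply: eq_bigr => t _; apply: eq_bigr => i _; rewrite ffunE.
rewrite big_fprod.
transitivity (\prod_(i : I) \sum_(t : T_ i) P_ i t); last first.
  by apply: eq_bigr => i _; apply: eq_bigr => t _; rewrite ffunE.
under [RHS]eq_bigr do rewrite (big_tag (fun i => P_ i)).
by rewrite (bigA_distr_big_dep (fun i => tagged_with T_ i)).
Qed.

Lemma prod_ind (I : finType) (P : pred I) (b : I -> bool) :
  \prod_(j | P j) ((b j)%:R : C) = if [forall j, P j ==> b j] then 1 else 0.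
Proof.
case: ifP => [/forallP h | /negbT].
  by rewrite big1 // => j Pj; have := h j; rewrite Pj /= => ->.
rewrite negb_forall => /fintype.existsP [j]; rewrite negb_imply => /andP[Pj bj].
by rewrite (bigD1 j) //= (negbTE bj) mul0r.
Qed.

Definition conv m1 m2 m1' m2' (A : Mat R 'I_m1 'I_m2) : Mat R 'I_m1' 'I_m2' :=
  fun u v => match (insub (val u) : option 'I_m1), (insub (val v) : option 'I_m2) with
             | Some u', Some v' => A u' v'
             | _, _ => 0 end.

Lemma conv_id m1 m2 (A : Mat R 'I_m1 'I_m2) : conv A = A.
Proof. by apply/funext => u; apply/funext => v; rewrite /conv !valK. Qed.

Lemma psd_conv m m' (A : Mat R 'I_m 'I_m) : m = m' -> psd A -> psd (conv A : Mat R 'I_m' 'I_m').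
Proof. by move=> h; subst m'; rewrite conv_id. Qed.

Lemma conv_sum m m' (A : Mat R 'I_m 'I_m) (u v : 'I_m') : m = m' ->
  \sum_(w : 'I_m) \sum_(t : 'I_m) (val u == val t)%:R * A t w * conjc ((val v == val w)%:R)
  = conv A u v.
Proof.
move=> h; subst m'; rewrite conv_id.
transitivity (\sum_(w : 'I_m) A u w * (w == v)%:R); last exact: sum_dr.
apply: eq_bigr => w _; rewrite cj_nat -mulr_suml val_eqE eq_sym; congr (_ * _).
by rewrite (eq_bigr (fun t => (t == u)%:R * A t w)) ?sum_dl // => t _; rewrite val_eqE eq_sym.
Qed.

Section Prod.
Variables (n : nat) (d : 'I_n -> nat).

Lemma trM_prod (s : forall i, Mat R 'I_(d i) 'I_(d i)) :
  trM (prod_op s) = \prod_i trM (s i).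
Proof. by rewrite /trM /prod_op (dep_distr (fun i t => s i t t)). Qed.

End Prod.

Section Key.
Variables (n : nat) (d e : 'I_n -> nat) (k : 'I_n).
Hypothesis hde : forall j, j != k -> d j = e j.
Variables (a : Mat R 'I_(e k) 'I_(d k)) (s : forall i, Mat R 'I_(d i) 'I_(d i)).

Definition snew : forall j, Mat R 'I_(e j) 'I_(e j) := fun j =>
  if j == k then conv (mulM (mulM a (@s k)) (adjM a)) else conv (@s j).

Definition lam j (u : 'I_(e j)) (t : 'I_(d j)) : C :=
  if j == k then conv a u t else (val u == val t)%:R.

Lemma lift_prod (x : Idx e) (p : Idx d) :
  lift_local a x p = \prod_j lam (x j) (p j).
Proof.
rewrite /lift_local (bigD1 k) //= /lam eqxx conv_id; congr (_ * _).
rewrite -prod_ind; apply: eq_bigr => j hj; by rewrite (negbTE hj).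
Qed.

Lemma key : mulM (mulM (lift_local a) (prod_op s)) (adjM (lift_local a)) = prod_op snew.
Proof.
apply/funext => x; apply/funext => y; rewrite /mulM /adjM /prod_op.
transitivity (\sum_(q : Idx d) \sum_(p : Idx d) \prod_j
   (lam (x j) (p j) * @s j (p j) (q j) * conjc (lam (y j) (q j)))).
  apply: eq_bigr => q _; rewrite mulr_suml; apply: eq_bigr => p _.
  by rewrite !big_split /= !lift_prod cj_prod.
under eq_bigr => q _ do rewrite (dep_distr (fun j t => lam (x j) t * @s j t (q j) * conjc (lam (y j) (q j)))).
rewrite (dep_distr (fun j u => \sum_t lam (x j) t * @s j t u * conjc (lam (y j) u))).
apply: eq_bigr => j _.
case: (eqVneq j k) => [ejk|njk].
  subst j; rewrite /snew /lam eqxx !conv_id.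
  by apply: eq_bigr => u _; rewrite mulr_suml.
rewrite /snew /lam (negbTE njk) -conv_sum //; exact: hde.
Qed.

End Key.


Section Cone.
Variables (n : nat).

Definition goodterm (d : 'I_n -> nat) (t : C * (forall i, Mat R 'I_(d i) 'I_(d i))) :=
  0 <= t.1 /\ forall i, psd (t.2 i).

Definition sepcone (d : 'I_n -> nat) (X : Op R d) :=
  exists l : seq {t | @goodterm d t},
    X = fun x y => \sum_(t <- l) (sval t).1 * prod_op (sval t).2 x y.

Lemma sepcone0 (d : 'I_n -> nat) : @sepcone d (fun _ _ => 0).
Proof. by exists [::]; apply/funext => x; apply/funext => y; rewrite big_nil. Qed.

Lemma sepconeD d (X Y : Op R d) : sepcone X -> sepcone Y ->
  sepcone (fun x y => X x y + Y x y).
Proof.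
move=> [l1 ->] [l2 ->]; exists (l1 ++ l2).
by apply/funext => x; apply/funext => y; rewrite big_cat.
Qed.

Definition linop (d e : 'I_n -> nat) (F : Op R d -> Op R e) :=
  forall (c : C) (X Y : Op R d),
    F (fun x y => c * X x y + Y x y) = fun x y => c * F X x y + F Y x y.
Definition adjop (d e : 'I_n -> nat) (F : Op R d -> Op R e) :=
  forall X, F (adjM X) = adjM (F X).
Definition sepop (d e : 'I_n -> nat) (F : Op R d -> Op R e) :=
  forall X, sepcone X -> sepcone (F X).
Definition goodop (d e : 'I_n -> nat) (F : Op R d -> Op R e) :=
  [/\ linop F, adjop F & sepop F].

Lemma goodop_comp (d e f : 'I_n -> nat) (F : Op R d -> Op R e) (G : Op R e -> Op R f) :
  goodop F -> goodop G -> goodop (G \o F).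
Proof.
move=> [lF aF sF] [lG aG sG]; split.
- by move=> c X Y /=; rewrite lF lG.
- by move=> X /=; rewrite aF aG.
- by move=> X hX /=; apply: sG; apply: sF.
Qed.

Lemma lin_sand (T U : finType) (B : Mat R T U) (D : Mat R U T) (c : C) (X Y : Mat R U U) :
  mulM (mulM B (fun x y => c * X x y + Y x y)) D =
  fun x y => c * mulM (mulM B X) D x y + mulM (mulM B Y) D x y.
Proof.
apply/funext => x; apply/funext => y; rewrite /mulM mulr_sumr -big_split.
apply: eq_bigr => q _; rewrite !mulr_suml mulr_sumr -big_split.
by apply: eq_bigr => p _; rewrite /=; ring.
Qed.

Lemma sand0 (T U : finType) (B : Mat R T U) (D : Mat R U T) :
  mulM (mulM B (fun _ _ => 0)) D = fun _ _ => 0.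
Proof.
apply/funext => x; apply/funext => y; rewrite /mulM big1 // => q _.
by rewrite big1 ?mul0r // => p _; rewrite mulr0.
Qed.

Lemma sand_sum (T U : finType) (B : Mat R T U) (D : Mat R U T) (I : Type) (l : seq I)
   (f : I -> C) (M : I -> Mat R U U) :
  mulM (mulM B (fun x y => \sum_(t <- l) f t * M t x y)) D =
  fun x y => \sum_(t <- l) f t * mulM (mulM B (M t)) D x y.
Proof.
elim: l => [|t l IH].
  rewrite (_ : (fun x y => _) = (fun _ _ => 0)) ?sand0.
    by apply/funext => x; apply/funext => y; rewrite big_nil.
  by apply/funext => x; apply/funext => y; rewrite big_nil.
rewrite (_ : (fun x y => _) = (fun x y => f t * M t x y + \sum_(t <- l) f t * M t x y)).
  rewrite lin_sand IH; apply/funext => x; apply/funext => y; by rewrite big_cons.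
by apply/funext => x; apply/funext => y; rewrite big_cons.
Qed.

Section LB.
Variables (k : 'I_n) (d e : 'I_n -> nat) (m : nat).
Variables (A : 'I_m -> seq (Mat R 'I_(e k) 'I_(d k))).
Hypothesis hde : forall j, j != k -> d j = e j.

Lemma lb_lin o : linop (local_branch A o).
Proof.
move=> c X Y; rewrite /local_branch; apply/funext => x; apply/funext => y.
rewrite mulr_sumr -big_split; apply: eq_bigr => a _.
by rewrite lin_sand.
Qed.

Lemma lb_adj o : adjop (local_branch A o).
Proof.
move=> X; rewrite /local_branch; apply/funext => x; apply/funext => y.
rewrite [RHS]/adjM cj_sum; apply: eq_bigr => a _.
have <- : adjM (mulM (mulM (lift_local a) X) (adjM (lift_local a))) =
          mulM (mulM (lift_local a) (adjM X)) (adjM (lift_local a)).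
  by rewrite !adjM_mul adjMK mulMA.
by [].
Qed.

Lemma snew_good (a : Mat R 'I_(e k) 'I_(d k)) (t : {t | @goodterm d t}) :
  @goodterm e ((sval t).1, snew a (sval t).2).
Proof.
case: t => [[w s] [hw hs]] /=; split => // j.
rewrite /snew; case: (eqVneq j k) => [ejk|njk].
  subst j; rewrite /= eqxx conv_id; exact: psd_cong.
rewrite /= (negbTE njk); apply: psd_conv; [exact: hde | exact: hs].
Qed.

Lemma lb_sep o : sepop (local_branch A o).
Proof.
move=> X [l ->].
exists (flatten [seq [seq exist _ _ (snew_good a t) | t <- l] | a <- A o]).
rewrite /local_branch; apply/funext => x; apply/funext => y.
rewrite big_flatten /= big_map; apply: eq_bigr => a _.
rewrite big_map sand_sum; apply: eq_bigr => t _ /=.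
by rewrite (key hde).
Qed.

Lemma lb_good o : goodop (local_branch A o).
Proof. split; [exact: lb_lin | exact: lb_adj | exact: lb_sep]. Qed.

End LB.



Lemma In_cat (T : Type) (x : T) (s1 s2 : seq T) :
  List.In x (s1 ++ s2) -> List.In x s1 \/ List.In x s2.
Proof.
elim: s1 => [|y s1 IH] /=; first by right.
by case=> [->|/IH [h|h]]; [left; left | left; right | right].
Qed.

Lemma In_map (T U : Type) (f : T -> U) (y : U) (s : seq T) :
  List.In y (map f s) -> exists x, List.In x s /\ y = f x.
Proof.
elim: s => [|x s IH] //= [<-|/IH [z [h ->]]]; first by exists x; split; [left|].
by exists z; split; [right|].
Qed.

Lemma in_comp (d e f : 'I_n -> nat) (Fs : seq (Op R d -> Op R e))
  (Gss : seq (seq (Op R e -> Op R f))) :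
  (forall F, List.In F Fs -> goodop F) ->
  (forall i, (i < size Fs)%N -> forall G, List.In G (nth [::] Gss i) -> goodop G) ->
  forall H, List.In H (flatten [seq [seq G \o p.1 | G <- p.2] | p <- zip Fs Gss]) ->
  goodop H.
Proof.
elim: Fs Gss => [|F Fs IH] [|Gs Gss] //= hF hG H hH.
have [h1|h2] := In_cat hH.
  have [G [hG' ->]] := In_map h1; apply: goodop_comp; first by apply: hF; left.
  exact: (hG 0%N).
move: h2.
apply: IH => [F' hF'|i hi G hG']; first by apply: hF; right.
exact: (hG i.+1).
Qed.

Lemma LOCC_good (d e : 'I_n -> nat) (Fs : seq (Op R d -> Op R e)) :
  LOCC_instr Fs -> forall F, List.In F Fs -> goodop F.
Proof.
move=> h; induction h as [k d' e' m A hde hA | d' e' f' Fs' Gss hF IHF hsz hG IHG].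
  by move=> F hF0; have [o [_ ->]] := In_map hF0; apply: lb_good.
by apply: in_comp => // i hi; apply: IHG.
Qed.

Lemma eq_big_In (I : Type) (s : seq I) (F G : I -> C) :
  (forall i, List.In i s -> F i = G i) -> \sum_(i <- s) F i = \sum_(i <- s) G i.
Proof.
elim: s => [|i s IH] h; first by rewrite !big_nil.
by rewrite !big_cons (h i (or_introl erefl)) (IH (fun j hj => h j (or_intror hj))).
Qed.

Lemma sep_sum (d : 'I_n -> nat) (Fs : seq (Op R d -> Op R d)) X :
  (forall F, List.In F Fs -> sepop F) -> sepcone X ->
  sepcone (fun x y => \sum_(F <- Fs) F X x y).
Proof.
move=> hg hX; elim: Fs hg => [|F Fs IH] hg.
  rewrite (_ : (fun _ _ => _) = fun _ _ => 0); first exact: sepcone0.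
  by apply/funext => x; apply/funext => y; rewrite big_nil.
rewrite (_ : (fun _ _ => _) = fun x y => F X x y + \sum_(F <- Fs) F X x y).
  apply: sepconeD; first by apply: (hg F (or_introl erefl)).
  by apply: IH => G hG; apply: hg; right.
by apply/funext => x; apply/funext => y; rewrite big_cons.
Qed.

Section Chan.
Variables (d : 'I_n -> nat) (L : Op R d -> Op R d).
Hypothesis hL : LOCC_channel L.

Lemma chan_good : goodop L.
Proof.
case: hL => Fs [hFs hsum].
have hg := LOCC_good hFs.
have LE : forall X, L X = fun x y => \sum_(F <- Fs) F X x y.
  by move=> X; apply/funext => x; apply/funext => y; rewrite hsum.
split.
- move=> c X Y; rewrite !LE; apply/funext => x; apply/funext => y.
  rewrite mulr_sumr -big_split; apply: eq_big_In => F hF /=.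
  by case: (hg F hF) => -> _ _.
- move=> X; rewrite !LE; apply/funext => x; apply/funext => y.
  rewrite {2}/adjM cj_sum; apply: eq_big_In => F hF /=.
  by case: (hg F hF) => _ -> _.
- move=> X hX; rewrite LE; apply: sep_sum => // F hF.
  by case: (hg F hF).
Qed.

End Chan.



Section SepCone.
Variable d : 'I_n -> nat.

Lemma sep_tr (X : Op R d) : separable X -> trM X = 1.
Proof.
case=> k [p [s [hp hp1 hs hX]]].
rewrite /trM; under eq_bigr do rewrite hX.
rewrite exchange_big -[RHS]hp1; apply: eq_bigr => j _.
rewrite -mulr_sumr -[X in _ * X = _]/(trM (prod_op (s j))) trM_prod big1 ?mulr1 //.
by move=> i _; case: (hs j i).
Qed.

Lemma sep_cone (X : Op R d) : separable X -> sepcone X.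
Proof.
case=> k [p [s [hp hp1 hs hX]]].
have pf : forall j, @goodterm d (p j, s j).
  by move=> j; split => //= i; case: (hs j i).
exists [seq exist _ _ (pf j) | j <- index_enum 'I_k].
apply/funext => x; apply/funext => y; rewrite hX big_map.
by [].
Qed.

Lemma trM_sum (I : Type) (l : seq I) (f : I -> C) (M : I -> Op R d) :
  trM (fun x y => \sum_(t <- l) f t * M t x y) = \sum_(t <- l) f t * trM (M t).
Proof.
rewrite /trM exchange_big; apply: eq_bigr => t _; by rewrite mulr_sumr.
Qed.

Lemma psd0 (T : finType) : psd (fun _ _ : T => 0 : C).
Proof.
split; first by move=> x y; rewrite conjc0.
by move=> v; rewrite big1 // => x _; rewrite big1 // => y _; rewrite mulr0 mul0r.
Qed.

Lemma delta_dens (m : nat) (t : 'I_m) :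
  density (fun u v : 'I_m => ((u == t) && (v == t))%:R : C).
Proof.
split; last first.
  by rewrite /trM (bigD1 t) //= eqxx big1 ?addr0 // => u /negbTE ->.
split; first by move=> u v; rewrite cj_nat andbC.
move=> v; rewrite (bigD1 t) //= [X in _ + X]big1 => [|u hu]; last first.
  by rewrite big1 // => w _; rewrite (negbTE hu) /= mulr0 mul0r.
rewrite addr0 (bigD1 t) //= [X in _ + X]big1 => [|u hu]; last first.
  by rewrite eqxx (negbTE hu) /= mulr0 mul0r.
by rewrite eqxx addr0 mulr1 mulJ_ge0.
Qed.

Lemma cone_sep (X : Op R d) : sepcone X -> trM X = 1 -> separable X.
Proof.
move=> [l hX] htr.
have [x0 _|hnone] := pickP (@predT (Idx d)); last first.
  have : trM X = 0 by rewrite /trM big_pred0.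
  by rewrite htr => /eqP; rewrite oner_eq0.
pose tau (t : {t | @goodterm d t}) i := trM ((sval t).2 i).
pose dens (t : {t | @goodterm d t}) i : Mat R 'I_(d i) 'I_(d i) :=
  if tau t i == 0 then (fun u v => ((u == x0 i) && (v == x0 i))%:R)
  else (fun u v => (tau t i)^-1 * (sval t).2 i u v).
pose wt (t : {t | @goodterm d t}) := (sval t).1 * \prod_i tau t i.
have tau_ge0 : forall t i, 0 <= tau t i.
  by move=> [[w s] [hw hs]] i; apply: psd_tr_ge0; exact: hs.
have hdens : forall t i, density (dens t i).
  move=> t i; rewrite /dens; case: ifP => [_|/negbT h]; first exact: delta_dens.
  case: t h => [[w s] [hw hs]] /= h; split.
    by apply: psd_scale; [rewrite invr_ge0; exact: (tau_ge0 (exist _ (w, s) (conj hw hs))) | exact: hs].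
  by rewrite /trM -mulr_sumr mulVf.
have hwt : forall t, 0 <= wt t.
  move=> [[w s] [hw hs]]; rewrite /wt /=; apply: mulr_ge0 => //.
  by apply: prodr_ge0 => i _; exact: (tau_ge0 (exist _ (w, s) (conj hw hs))).
have hterm : forall t x y, (sval t).1 * prod_op (sval t).2 x y = wt t * prod_op (dens t) x y.
  move=> t x y; rewrite /wt; case: (pickP (fun i => tau t i == 0)) => [i /eqP hi|hnone]; last first.
    have hall : forall i, tau t i != 0 by move=> i; rewrite hnone.
    rewrite /prod_op.
    have -> : \prod_i dens t i (x i) (y i) = \prod_i ((tau t i)^-1 * (sval t).2 i (x i) (y i)).
      by apply: eq_bigr => i _; rewrite /dens (negbTE (hall i)).
    rewrite big_split /= prodfV -mulrA (mulrA (\prod_i tau t i)) mulfV ?mul1r //.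
    by apply/prodf_neq0 => i _; exact: hall.
  have hz : (sval t).2 i = fun _ _ => 0.
    have hps : psd ((sval t).2 i) by case: (proj2_sig t) => _; apply.
    by apply/funext => u; apply/funext => v; exact: (psd_tr0 hps hi).
  rewrite /prod_op (bigD1 i) //= hz mul0r mulr0 (bigD1 i) //= hi mul0r.
  by rewrite mulr0 mul0r.
pose t0 : {t | @goodterm d t} := exist _ (0, fun i => fun _ _ => 0) (conj (lexx 0) (fun i => psd0 _)).
exists (size l), (fun j => wt (nth t0 l j)), (fun j => dens (nth t0 l j)); split.
- by move=> j; exact: hwt.
- rewrite -(big_mkord xpredT (fun j => wt (nth t0 l j))) -(big_nth t0 xpredT wt).
  rewrite -htr hX trM_sum; apply: eq_bigr => t _.
  by rewrite /wt trM_prod.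
- by move=> j i; exact: hdens.
- move=> x y; rewrite hX.
  rewrite -(big_mkord xpredT (fun j => wt (nth t0 l j) * prod_op (dens (nth t0 l j)) x y)).
  rewrite -(big_nth t0 xpredT (fun t => wt t * prod_op (dens t) x y)).
  by apply: eq_bigr => t _; rewrite hterm.
Qed.

End SepCone.



Lemma if_nat (b : bool) : (if b then 1 else 0 : C) = b%:R.
Proof. by case: b. Qed.

Lemma trW_sum (d : 'I_n -> nat) (I : Type) (s : seq I) (f : I -> C) (M : I -> Op R d) (W : Op R d) :
  trM (mulM W (fun a b => \sum_(j <- s) f j * M j a b)) = \sum_(j <- s) f j * trM (mulM W (M j)).
Proof.
rewrite /trM /mulM.
transitivity (\sum_x \sum_y \sum_(j <- s) f j * (W x y * M j y x)).
  apply: eq_bigr => x _; apply: eq_bigr => y _; rewrite mulr_sumr.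
  by apply: eq_bigr => j _; ring.
under eq_bigr do rewrite exchange_big.
rewrite exchange_big; apply: eq_bigr => j _; rewrite mulr_sumr.
by apply: eq_bigr => x _; rewrite mulr_sumr.
Qed.

Section Dual.
Variables (d : 'I_n -> nat) (L : Op R d -> Op R d).
Hypotheses (hL : LOCC_channel L) (htp : trace_preserving L) (hun : unital L).

Definition Emat (y x : Idx d) : Op R d := fun a b => ((a == y) && (b == x))%:R.
Definition Ldual (W : Op R d) : Op R d := fun x y => trM (mulM W (L (Emat y x))).

Lemma L_lin : linop L. Proof. by case: (chan_good hL). Qed.
Lemma L_adj : adjop L. Proof. by case: (chan_good hL). Qed.
Lemma L_sep : sepop L. Proof. by case: (chan_good hL). Qed.

Lemma L0 : L (fun _ _ => 0) = fun _ _ => 0.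
Proof.
have h := L_lin 1 (fun _ _ => 0) (fun _ _ => 0).
have e : (fun x y : Idx d => 1 * (fun _ _ => (0 : C)) x y + (fun _ _ => 0) x y) = (fun _ _ => 0).
  by apply/funext => x; apply/funext => y; rewrite mulr0 addr0.
rewrite e in h; apply/funext => x; apply/funext => y.
have := congr1 (fun M => M x y) h => /=.
by rewrite mul1r -{1}[L _ x y]addr0 => /addrI <-.
Qed.

Lemma L_sum (I : Type) (s : seq I) (f : I -> C) (M : I -> Op R d) :
  L (fun a b => \sum_(j <- s) f j * M j a b) = fun a b => \sum_(j <- s) f j * L (M j) a b.
Proof.
elim: s => [|j s IH].
  rewrite (_ : (fun a b => _) = fun _ _ => 0) ?L0.
    by apply/funext => x; apply/funext => y; rewrite big_nil.
  by apply/funext => x; apply/funext => y; rewrite big_nil.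
rewrite (_ : (fun a b => _) = fun a b => f j * M j a b + \sum_(j <- s) f j * M j a b).
  rewrite L_lin IH; apply/funext => x; apply/funext => y; by rewrite big_cons.
by apply/funext => x; apply/funext => y; rewrite big_cons.
Qed.

Lemma mat_decomp (X : Op R d) :
  X = fun a b => \sum_(p : Idx d * Idx d) X p.1 p.2 * Emat p.1 p.2 a b.
Proof.
apply/funext => a; apply/funext => b.
rewrite -(pair_big xpredT xpredT (fun y x => X y x * Emat y x a b)) /=.
rewrite /Emat.
transitivity (\sum_(y : Idx d) (y == a)%:R * X y b); first by rewrite sum_dl.
apply: eq_bigr => y _.
transitivity (\sum_(x : Idx d) (y == a)%:R * X y x * (x == b)%:R); first by rewrite sum_dr.
by apply: eq_bigr => x _; rewrite -mulnb natrM [a == y]eq_sym [b == x]eq_sym; ring.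
Qed.

Lemma trdual (W X : Op R d) : trM (mulM (Ldual W) X) = trM (mulM W (L X)).
Proof.
rewrite {2}(mat_decomp X) L_sum trW_sum.
rewrite /trM /mulM /Ldual.
rewrite -(pair_big xpredT xpredT (fun y x => X y x * trM (mulM W (L (Emat y x))))) /=.
rewrite exchange_big; apply: eq_bigr => y _; apply: eq_bigr => x _.
by rewrite mulrC.
Qed.

Lemma herm_dual W : herm W -> herm (Ldual W).
Proof.
move=> hW x y; rewrite /Ldual conj_trM adjM_mul -L_adj (herm_adj hW) [RHS]trM_mulC.
congr (trM (mulM W (L _))).
by apply/funext => a; apply/funext => b; rewrite /adjM /Emat cj_nat andbC.
Qed.

Lemma tr_dual W : trM (Ldual W) = trM W.
Proof.
rewrite {1}/trM /Ldual.
transitivity (\sum_(x : Idx d) 1 * trM (mulM W (L (Emat x x)))).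
  by apply: eq_bigr => x _; rewrite mul1r.
rewrite -trW_sum -L_sum.
have -> : (fun a b => \sum_(x : Idx d) 1 * Emat x x a b) = @idM R (Idx d).
  apply/funext => a; apply/funext => b; rewrite /idM if_nat /Emat.
  under eq_bigr do rewrite mul1r -mulnb natrM.
  under eq_bigr do rewrite [a == _]eq_sym.
  by rewrite sum_dl eq_sym.
have -> : L (@idM R (Idx d)) = @idM R (Idx d) by apply/funext => a; apply/funext => b; exact: hun.
rewrite /trM /mulM; apply: eq_bigr => x _.
under eq_bigr do rewrite /idM if_nat.
by rewrite sum_dr.
Qed.

Lemma EW_dual W : EW W -> EW (Ldual W).
Proof.
case=> hW hsep; split; first exact: herm_dual.
move=> sigma hs; rewrite trdual; apply: hsep.
apply: cone_sep; first by apply: L_sep; exact: sep_cone.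
by rewrite htp; exact: sep_tr.
Qed.

Lemma NEW_dual W : normalized_EW W -> normalized_EW (Ldual W).
Proof. by case=> h1 h2; split; [exact: EW_dual | rewrite tr_dual]. Qed.

End Dual.



Definition Ii : C := 'i%C.
Lemma cjI : conjc Ii = - Ii.
Proof. by apply/eqP; rewrite eq_complex /= oppr0 !eqxx. Qed.
Lemma Ii2 : Ii ^+ 2 = -1.
Proof. exact: sqr_i. Qed.

Definition zeta (k : 'I_4) : C := nth 0 [:: 1; Ii; -1; - Ii] k.

Definition czeta (k : 'I_4) : C := nth 0 [:: 1; - Ii; -1; Ii] k.
Lemma cj_zeta k : conjc (zeta k) = czeta k.
Proof.
by case: k => [[|[|[|[|//]]]] ?]; apply/eqP; rewrite eq_complex /= ?oppr0 ?opprK ?eqxx.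
Qed.

Lemma G1 (al be ga de : C) :
  \sum_(k < 4) conjc (zeta k) * (conjc (al + zeta k * be) * (ga + zeta k * de)) =
  4%:R * (conjc al * de).
Proof.
under eq_bigr do rewrite !(cjD, cjM) cj_zeta.
rewrite !big_ord_recl big_ord0 /zeta /czeta /=.
transitivity (2%:R * conjc al * de * (1 - Ii ^+ 2) + 2%:R * conjc be * ga * (1 + Ii ^+ 2)).
  ring.
rewrite Ii2; ring.
Qed.

Lemma G2 (al be ga de : C) :
  \sum_(k < 4) conjc (al + zeta k * be) * (ga + zeta k * de) =
  4%:R * (conjc al * ga + conjc be * de).
Proof.
under eq_bigr do rewrite !(cjD, cjM) cj_zeta.
rewrite !big_ord_recl big_ord0 /zeta /czeta /=.
transitivity (4%:R * conjc al * ga + 2%:R * conjc be * de * (1 - Ii ^+ 2)).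
  ring.
rewrite Ii2; ring.
Qed.

Lemma norm_zeta k : `|zeta k| = 1.
Proof.
have hI : `|Ii| = 1 by rewrite /Ii complexiE normCi.
by case: k => [[|[|[|[|//]]]] ?]; rewrite /zeta /= ?normrN ?normr1.
Qed.

Section Bound.
Variable d : 'I_n -> nat.

Lemma prod_eq (a b : Idx d) : \prod_i ((a i == b i)%:R : C) = (a == b)%:R.
Proof.
rewrite prod_ind -if_nat; congr (if _ then _ else _).
apply/idP/idP => [/forallP h|/eqP ->]; last by apply/forallP => i; rewrite eqxx.
by apply/eqP/ffunP => i; apply/eqP; have := h i.
Qed.

Lemma prodvec_ge0 (W : Op R d) (f : forall i, 'I_(d i) -> C) :
  EW W -> 0 <= form W (fun a => \prod_i f i (a i)).
Proof.
move=> [hW hsep].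
pose nu i := \sum_t conjc (f i t) * f i t.
have nu_ge0 : forall i, 0 <= nu i by move=> i; apply: sumr_ge0 => t _; exact: mulJ_ge0.
case: (pickP (fun i => nu i == 0)) => [i /eqP hi|hnone].
  have fi0 : forall t, f i t = 0.
    move=> t; apply/eqP; rewrite -mulJ_eq0; apply/eqP.
    by apply: (psumr_eq0P _ hi) => // u _; exact: mulJ_ge0.
  rewrite /form big1 // => a _; rewrite big1 // => b _.
  by rewrite [X in _ * X](bigD1 i) //= fi0 mul0r mulr0.
have nu0 : forall i, nu i != 0 by move=> i; rewrite hnone.
pose s i : Mat R 'I_(d i) 'I_(d i) := fun u v => (nu i)^-1 * (f i u * conjc (f i v)).
have cge0 : forall i, 0 <= (nu i)^-1 by move=> i; rewrite invr_ge0.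
have hs : forall i, density (s i).
  move=> i; split; last first.
    rewrite /trM /s -mulr_sumr (eq_bigr (fun t => conjc (f i t) * f i t)); last by move=> t _; rewrite mulrC.
    exact: mulVf.
  split.
    by move=> u v; rewrite /s cjM (ge0_conj (cge0 i)) cjM conjcK [_ * f i u]mulrC.
  move=> v.
  have -> : \sum_u \sum_w conjc (v u) * s i u w * v w =
      (nu i)^-1 * ((\sum_u conjc (v u) * f i u) * conjc (\sum_u conjc (v u) * f i u)).
    rewrite cj_sum mulr_suml mulr_sumr; apply: eq_bigr => u _.
    rewrite mulr_sumr mulr_sumr; apply: eq_bigr => w _.
    by rewrite /s cjM conjcK; ring.
  by apply: mulr_ge0; [exact: cge0 | exact: mulcJ_ge0].
have hsig : separable (prod_op s).
  exists 1%N, (fun _ => 1), (fun _ => s); split => //.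
  - by rewrite big_ord1.
  - by move=> x y; rewrite big_ord1 mul1r.
have := hsep _ hsig.
pose P := \prod_i nu i.
have P0 : P != 0 by apply/prodf_neq0 => i _; exact: nu0.
have Pge0 : 0 <= P by apply: prodr_ge0 => i _.
have -> : trM (mulM W (prod_op s)) = P^-1 * form W (fun a => \prod_i f i (a i)).
  rewrite /trM /mulM /form mulr_sumr; apply: eq_bigr => a _.
  rewrite mulr_sumr; apply: eq_bigr => b _.
  rewrite /prod_op /s big_split big_split /= prodfV cj_prod.
  by rewrite -/P; ring.
move=> h; set F := form _ _ in h *.
have -> : F = P * (P^-1 * F) by rewrite mulrA mulfV ?mul1r.
exact: mulr_ge0.
Qed.

Lemma W_diag (W : Op R d) a : EW W -> 0 <= W a a.
Proof.
move=> hW; have := prodvec_ge0 (fun i t => (t == a i)%:R) hW.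
have -> : (fun b : Idx d => \prod_i ((b i == a i)%:R : C)) = fun b => (b == a)%:R.
  by apply/funext => b; exact: prod_eq.
rewrite /form; under eq_bigr do rewrite sum_dr cj_nat.
by rewrite sum_dl.
Qed.

Definition fk (x y : Idx d) i (k : 'I_4) (t : 'I_(d i)) : C :=
  (t == x i)%:R + zeta k * (t == y i)%:R.
Definition Qw (W : Op R d) x y (om : {ffun 'I_n -> 'I_4}) :=
  form W (fun a => \prod_i fk x y (om i) (a i)).

Lemma sumQ (W : Op R d) x y (g : 'I_n -> 'I_4 -> C) :
  \sum_(om : {ffun 'I_n -> 'I_4}) (\prod_i g i (om i)) * Qw W x y om =
  \sum_a \sum_b W a b * \prod_i \sum_(k < 4) g i k * (conjc (fk x y k (a i)) * fk x y k (b i)).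
Proof.
rewrite /Qw /form.
transitivity (\sum_(om : {ffun 'I_n -> 'I_4}) \sum_a \sum_b W a b *
   \prod_i (g i (om i) * (conjc (fk x y (om i) (a i)) * fk x y (om i) (b i)))).
  apply: eq_bigr => om _; rewrite mulr_sumr; apply: eq_bigr => a _.
  rewrite mulr_sumr; apply: eq_bigr => b _.
  by rewrite big_split big_split /= cj_prod; ring.
rewrite exchange_big; apply: eq_bigr => a _.
rewrite exchange_big; apply: eq_bigr => b _.
rewrite -mulr_sumr; congr (_ * _).
by rewrite (bigA_distr_bigA (fun i k => g i k * (conjc (fk x y k (a i)) * fk x y k (b i)))).
Qed.

Lemma ident1 (W : Op R d) x y :
  \sum_(om : {ffun 'I_n -> 'I_4}) (\prod_i conjc (zeta (om i))) * Qw W x y om =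
  (4 ^ n)%:R * W x y.
Proof.
rewrite (sumQ W x y (fun i k => conjc (zeta k))).
transitivity (\sum_a \sum_b W a b * ((4 ^ n)%:R * ((a == x)%:R * (b == y)%:R))).
  apply: eq_bigr => a _; apply: eq_bigr => b _; congr (_ * _).
  rewrite /fk; under eq_bigr do rewrite G1 cj_nat.
  rewrite big_split /= prodr_const card_ord natrX big_split /= !prod_eq //.
rewrite (bigD1 x) //= [X in _ + X]big1 ?addr0; last first.
  by move=> a ha; rewrite big1 // => b _; rewrite (negbTE ha) mul0r mulr0 mulr0.
rewrite eqxx.
under eq_bigr do rewrite mul1r mulrCA.
by rewrite -mulr_sumr sum_dr mulrC.
Qed.

Definition Hm x y (a b : Idx d) : C :=
  \prod_i (4%:R * ((a i == x i)%:R * (b i == x i)%:R + (a i == y i)%:R * (b i == y i)%:R)).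

Lemma ident2 (W : Op R d) x y :
  \sum_(om : {ffun 'I_n -> 'I_4}) Qw W x y om = \sum_a \sum_b W a b * Hm x y a b.
Proof.
transitivity (\sum_(om : {ffun 'I_n -> 'I_4}) (\prod_(i < n) (1 : C)) * Qw W x y om).
  by apply: eq_bigr => om _; rewrite prodr_const expr1n mul1r.
rewrite (sumQ W x y (fun i k => 1)); apply: eq_bigr => a _; apply: eq_bigr => b _.
congr (_ * _); apply: eq_bigr => i _.
under eq_bigr do rewrite mul1r.
by rewrite /fk G2 !cj_nat.
Qed.

Lemma Hm_off x y a b : a != b -> Hm x y a b = 0.
Proof.
move=> hab; have [i hi] : exists i, a i != b i.
  apply/existsP; apply: contraR hab; rewrite negb_exists => /forallP h.
  by apply/eqP/ffunP => i; have := h i; rewrite negbK => /eqP.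
rewrite /Hm (bigD1 i) //=.
have -> : (a i == x i)%:R * (b i == x i)%:R + (a i == y i)%:R * (b i == y i)%:R = 0 :> C.
  have h1 : ((a i == x i) && (b i == x i)) = false.
    by apply/negbTE; apply: contra hi => /andP[/eqP -> /eqP ->].
  have h2 : ((a i == y i) && (b i == y i)) = false.
    by apply/negbTE; apply: contra hi => /andP[/eqP -> /eqP ->].
  by rewrite -!natrM !mulnb h1 h2 addr0.
by rewrite mulr0 mul0r.
Qed.

Lemma Hm_diag x y a : 0 <= Hm x y a a <= (8 ^ n)%:R.
Proof.
have e8 : (8 ^ n)%:R = \prod_(i < n) (8%:R : C).
  by rewrite prodr_const card_ord natrX.
rewrite e8 /Hm; apply/andP; split.
  apply: prodr_ge0 => i _.
  by rewrite -!natrM -natrD -natrM ler0n.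
apply: ler_prod => i _.
rewrite -!natrM -natrD -natrM ler0n ler_nat /=.
by case: (a i == x i); case: (a i == y i).
Qed.

Lemma sumQ_le (W : Op R d) x y : normalized_EW W ->
  \sum_(om : {ffun 'I_n -> 'I_4}) Qw W x y om <= (8 ^ n)%:R.
Proof.
move=> [hW htr]; rewrite ident2.
have -> : \sum_a \sum_b W a b * Hm x y a b = \sum_a W a a * Hm x y a a.
  apply: eq_bigr => a _; rewrite (bigD1 a) //= [X in _ + X]big1 ?addr0 // => b hb.
  by rewrite Hm_off ?mulr0 // eq_sym.
apply: (@le_trans _ _ (\sum_a W a a * (8 ^ n)%:R)).
  apply: ler_sum => a _; apply: ler_wpM2l; first exact: (W_diag a hW).
  by case/andP: (Hm_diag x y a).
by rewrite -mulr_suml -/(trM W) htr mul1r.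
Qed.

Lemma W_bound (W : Op R d) x y : normalized_EW W -> `|W x y| <= (2 ^ n)%:R.
Proof.
move=> hN.
have h4 : `|(4 ^ n)%:R * W x y| <= (8 ^ n)%:R.
  rewrite -ident1; apply: le_trans (ler_norm_sum _ _ _) _.
  apply: le_trans (sumQ_le x y hN); apply: ler_sum => om _.
  rewrite /Qw normrM (ger0_norm (prodvec_ge0 (fun i => fk x y (om i)) hN.1)).
  rewrite normr_prod (eq_bigr (fun _ => 1)) ?prodr_const ?expr1n ?mul1r //.
  by move=> i _; rewrite normcJ norm_zeta.
rewrite normrM ger0_norm ?ler0n // in h4.
have e : (8 ^ n)%:R = (4 ^ n)%:R * (2 ^ n)%:R :> C by rewrite -natrM -expnMn.
by rewrite e ler_pM2l ?ltr0n ?expn_gt0 // in h4.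
Qed.



End Bound.

Section Final.
Variables (d : 'I_n -> nat).

Lemma ge0_ReC (c : C) : 0 <= c -> c = ((complex.Re c)%:C)%C.
Proof. by case: c => a b; rewrite lecE /= => /andP[/eqP -> _]. Qed.

Lemma NEW_bound (rho : Op R d) :
  exists B : R, forall W, normalized_EW W -> - B <= complex.Re (trM (mulM W rho)).
Proof.
pose Bc : C := \sum_x \sum_y (2 ^ n)%:R * `|rho y x|.
have hB : 0 <= Bc by apply: sumr_ge0 => x _; apply: sumr_ge0 => y _; rewrite mulr_ge0 ?ler0n.
exists (complex.Re Bc) => W hW.
have h1 : `|trM (mulM W rho)| <= Bc.
  apply: le_trans (ler_norm_sum _ _ _) _; apply: ler_sum => x _.
  apply: le_trans (ler_norm_sum _ _ _) _; apply: ler_sum => y _.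
  by rewrite normrM ler_wpM2r // W_bound.
have h2 := normc_ge_Re (trM (mulM W rho)).
have : ((`|complex.Re (trM (mulM W rho))|)%:C)%C <= ((complex.Re Bc)%:C)%C.
  by rewrite -ge0_ReC //; apply: le_trans h2 h1.
by rewrite lecR ler_norml => /andP[].
Qed.

Definition W0 : Op R d := fun x y => (#|Idx d|%:R)^-1 * @idM R (Idx d) x y.

Lemma NEW_W0 : (0 < #|Idx d|)%N -> normalized_EW W0.
Proof.
move=> hc; have hc0 : (#|Idx d|%:R : C) != 0 by rewrite pnatr_eq0 -lt0n.
have cge0 : 0 <= (#|Idx d|%:R : C)^-1 by rewrite invr_ge0 ler0n.
split; last first.
  rewrite /trM /W0 (eq_bigr (fun _ => (#|Idx d|%:R)^-1)) => [|x _]; last by rewrite /idM eqxx mulr1.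
  rewrite sumr_const -(mulr_natr ((#|Idx d|%:R)^-1 : C)).
  exact: mulVf.
split.
  move=> x y; rewrite /W0 cjM ge0_conj // /idM eq_sym.
  by case: (y == x); rewrite ?conjc1 ?conjc0.
move=> sigma hs; rewrite /trM /mulM /W0.
have -> : \sum_(x : Idx d) \sum_(y : Idx d) (#|Idx d|%:R)^-1 * @idM R (Idx d) x y * sigma y x
   = (#|Idx d|%:R)^-1 * trM sigma.
  rewrite /trM mulr_sumr; apply: eq_bigr => x _.
  under eq_bigr do rewrite /idM if_nat eq_sym -mulrA mulrCA.
  by rewrite sum_dl.
by rewrite sep_tr // mulr1.
Qed.

End Final.

End Cone.

End Basic.

Section Mono.
Local Open Scope classical_set_scope.
Lemma Ew_mono (R : realType) (S1 S2 : set R) : (S1 `<=` S2) -> S1 !=set0 -> has_lbound S2 ->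
  Num.max 0 (- inf S1) <= Num.max 0 (- inf S2).
Proof.
move=> hsub hne hlb.
have hinf : inf S2 <= inf S1.
  apply: lb_le_inf => // y hy; apply: (ge_inf hlb); exact: hsub.
by rewrite ge_max le_max lexx /= le_max lerN2 hinf orbT.
Qed.
End Mono.

Theorem proposition2 (R : realType) (n : nat) (d : 'I_n -> nat)
    (L : Op R d -> Op R d) :
  LOCC_channel L -> trace_preserving L -> unital L ->
  forall rho : Op R d, density rho -> E_W (L rho) <= E_W rho.
Proof.
move=> hL htp hun rho [hpsd htr].
have hc : (0 < #|Idx d|)%N.
  rewrite lt0n; apply/negP => /eqP h0.
  have : trM rho = 0 by rewrite /trM big_pred0 // => x; move: h0 => /card0_eq /(_ x).
  by rewrite htr => /eqP; rewrite oner_eq0.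
rewrite /E_W; apply: Ew_mono.
- move=> y [W hW <-]; exists (Ldual L W); first exact: (NEW_dual hL htp hun).
  by rewrite (trdual hL).
- by exists (complex.Re (trM (mulM (@W0 R n d) (L rho)))); exists (@W0 R n d) => //; exact: NEW_W0.
- have [B hB] := NEW_bound rho; exists (- B) => y [W hW <-]; exact: hB.
Qed.
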